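(* In System $\mathsf{F_{<:}^{K\top}}$, for every term-in-context $\Theta\vdash t$ and type $\Theta\vdash T$: $\Theta\vdash t:T$ if and only if there is a type $S$ with $\Theta\vdash_M t:S$ and $\Theta\vdash S<:T$.
   Context: System $\mathsf{F_{<:}^{K\top}}$: raw types $T ::= \top \mid X \mid T\to T \mid \forall^{\mathsf K}(X<:T).T \mid \forall^\top(X<:T).T$, up to $\alpha$-conversion. Contexts $\Theta$: finite sequences of $X<:T$ or $x:T$ with distinct variables, each type well-formed over the preceding part. Subtyping $\Theta\vdash S<:T$: (Var) $\Theta,X<:T,\Theta'\vdash X<:T$; (Top) $T<:\top$; (Refl); (Trans); ($\to$) from $S'<:S$, $T<:T'$ infer $S\to T<:S'\to T'$; ($\forall$-Fun) from $\Theta,X<:S\vdash T<:T'$ infer $\Theta\vdash\forall^{\mathsf K}(X<:S).T<:\forall^{\mathsf K}(X<:S).T'$; ($\forall$-Loc) from $\Theta\vdash T_0<:S_0$, $\Theta,X<:S_0\vdash S_1<:T_1$ infer $\Theta\vdash\forall^{\mathsf K}(X<:S_0).S_1<:\forall^\top(X<:T_0).T_1$; ($\forall$-Top) from $\Theta\vdash T_0<:S_0$, $\Theta,X<:\top\vdash S_1<:T_1$ infer $\Theta\vdash\forall^\top(X<:S_0).S_1<:\forall^\top(X<:T_0).T_1$. Raw terms $t ::= \mathsf{top}\mid x\mid\lambda(x:T).t\mid\Lambda(X<:T).t\mid t\,t\mid t\{T\}$. Typing $\Theta\vdash t:T$: $\Theta\vdash\mathsf{top}:\top$; $\Theta,x:T,\Theta'\vdash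 x:T$; (sub) from $t:T$, $T<:T'$ infer $t:T'$; from $\Theta,x:S\vdash t:T$ infer $\Theta\vdash\lambda(x:S).t:S\to T$; from $t:S\to T$, $s:S$ infer $t\,s:T$; from $\Theta,X<:S\vdash t:T$ infer $\Theta\vdash\Lambda(X<:S).t:\forall^{\mathsf K}(X<:S).T$; from $\Theta\vdash t:\forall^\top(X<:S).T$ and $\Theta\vdash S'<:S$ infer $\Theta\vdash t\{S'\}:T[S'/X]$. $\Theta^*(T)=\Theta^*(S)$ if $T\equiv X$ and $X<:S$ occurs in $\Theta$; $\Theta^*(T)=T$ otherwise. Minimal typing $\Theta\vdash_M t:T$: $\Theta,x:T,\Theta'\vdash_M x:T$; $\Theta\vdash_M\mathsf{top}:\top$; from $\Theta,x:S\vdash_M t:T$ infer $\Theta\vdash_M\lambda(x:S).t:S\to T$; from $\Theta\vdash_M r:R$, $\Theta\vdash_M s:S$, $\Theta\vdash S<:S'$ with $\Theta^*(R)=S'\to T$ infer $\Theta\vdash_M r\,s:T$; from $\Theta,X<:S\vdash_M t:T$ infer $\Theta\vdash_M\Lambda(X<:S).t:\forall^{\mathsf K}(X<:S).T$; from $\Theta\vdash_M r:R$ and $\Theta\vdash S<:S'$ with $\Theta^*(R)=\forall^{\mathsf K}(X<:S').T$ or $\Theta^*(R)=\forall^\top(X<:S').T$ infer $\Theta\vdash_M r\{S\}:T[S/X]$. *)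

(* Defs.v *)
(* System F_{<:}^{K,T} with de Bruijn indices (a single index
   space shared by type and term variables, as in TAPL's F_{<:} implementation).
   alpha-conversion is thereby built in. Index 0 = most recently bound. *)
From Stdlib Require Import Arith List.
Import ListNotations.

Inductive typ : Type :=
| TTop : typ
| TVar : nat -> typ
| TArr : typ -> typ -> typ
| TAllK : typ -> typ -> typ   (* forall^K (X <: S). T ; T under one binder *)
| TAllT : typ -> typ -> typ.

Inductive term : Type :=
| ttop : term
| tvar : nat -> term
| tabs : typ -> term -> term
| ttabs : typ -> term -> term
| tapp : term -> term -> term
| ttapp : term -> typ -> term.

Inductive binding : Type :=
| BSub : typ -> binding
| BTyp : typ -> binding.

(* Head of the list = most recent binding. The type stored in the binding at
   position n lives in the context (skipn (S n) G). *)
Definition ctx := list binding.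

Fixpoint tshift (d c : nat) (T : typ) : typ :=
  match T with
  | TTop => TTop
  | TVar n => if c <=? n then TVar (n + d) else TVar n
  | TArr A B => TArr (tshift d c A) (tshift d c B)
  | TAllK A B => TAllK (tshift d c A) (tshift d (S c) B)
  | TAllT A B => TAllT (tshift d c A) (tshift d (S c) B)
  end.

Fixpoint tunshift (c : nat) (T : typ) : typ :=
  match T with
  | TTop => TTop
  | TVar n => if c <? n then TVar (n - 1) else TVar n
  | TArr A B => TArr (tunshift c A) (tunshift c B)
  | TAllK A B => TAllK (tunshift c A) (tunshift (S c) B)
  | TAllT A B => TAllT (tunshift c A) (tunshift (S c) B)
  end.

Fixpoint tsubst (j : nat) (s : typ) (T : typ) : typ :=
  match T with
  | TTop => TTop
  | TVar n => if n =? j then s else TVar n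
  | TArr A B => TArr (tsubst j s A) (tsubst j s B)
  | TAllK A B => TAllK (tsubst j s A) (tsubst (S j) (tshift 1 0 s) B)
  | TAllT A B => TAllT (tsubst j s A) (tsubst (S j) (tshift 1 0 s) B)
  end.

(* T[S/X] where T is the body of a binder (X = index 0) *)
Definition topen (T S : typ) : typ := tunshift 0 (tsubst 0 (tshift 1 0 S) T).

Inductive wf_typ : ctx -> typ -> Prop :=
| wft_top : forall G, wf_typ G TTop
| wft_var : forall G n U, nth_error G n = Some (BSub U) -> wf_typ G (TVar n)
| wft_arr : forall G A B, wf_typ G A -> wf_typ G B -> wf_typ G (TArr A B)
| wft_allK : forall G A B, wf_typ G A -> wf_typ (BSub A :: G) B -> wf_typ G (TAllK A B)
| wft_allT : forall G A B, wf_typ G A -> wf_typ (BSub A :: G) B -> wf_typ G (TAllT A B).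

Inductive wf_ctx : ctx -> Prop :=
| wfc_nil : wf_ctx []
| wfc_sub : forall G T, wf_ctx G -> wf_typ G T -> wf_ctx (BSub T :: G)
| wfc_typ : forall G T, wf_ctx G -> wf_typ G T -> wf_ctx (BTyp T :: G).

Inductive wf_term : ctx -> term -> Prop :=
| wfe_top : forall G, wf_term G ttop
| wfe_var : forall G n U, nth_error G n = Some (BTyp U) -> wf_term G (tvar n)
| wfe_abs : forall G S t, wf_typ G S -> wf_term (BTyp S :: G) t -> wf_term G (tabs S t)
| wfe_tabs : forall G S t, wf_typ G S -> wf_term (BSub S :: G) t -> wf_term G (ttabs S t)
| wfe_app : forall G r s, wf_term G r -> wf_term G s -> wf_term G (tapp r s)
| wfe_tapp : forall G t S, wf_term G t -> wf_typ G S -> wf_term G (ttapp t S).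

Inductive sub : ctx -> typ -> typ -> Prop :=
| S_Var : forall G n U, nth_error G n = Some (BSub U) ->
    sub G (TVar n) (tshift (S n) 0 U)
| S_Top : forall G T, sub G T TTop
| S_Refl : forall G T, sub G T T
| S_Trans : forall G S U T, sub G S U -> sub G U T -> sub G S T
| S_Arr : forall G S S' T T', sub G S' S -> sub G T T' -> sub G (TArr S T) (TArr S' T')
| S_AllFun : forall G S T T', sub (BSub S :: G) T T' -> sub G (TAllK S T) (TAllK S T')
| S_AllLoc : forall G S0 S1 T0 T1, sub G T0 S0 -> sub (BSub S0 :: G) S1 T1 ->
    sub G (TAllK S0 S1) (TAllT T0 T1)
| S_AllTop : forall G S0 S1 T0 T1, sub G T0 S0 -> sub (BSub TTop :: G) S1 T1 ->
    sub G (TAllT S0 S1) (TAllT T0 T1).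

(* Typing. In the lambda rule, the body type T of the conclusion lives in G;
   in the premise (context extended by x:S) it appears shifted by one. *)
Inductive typing : ctx -> term -> typ -> Prop :=
| T_Top : forall G, typing G ttop TTop
| T_Var : forall G n U, nth_error G n = Some (BTyp U) -> typing G (tvar n) (tshift (S n) 0 U)
| T_Sub : forall G t T T', typing G t T -> sub G T T' -> typing G t T'
| T_Abs : forall G S t T, typing (BTyp S :: G) t (tshift 1 0 T) -> typing G (tabs S t) (TArr S T)
| T_App : forall G r s S T, typing G r (TArr S T) -> typing G s S -> typing G (tapp r s) T
| T_TAbs : forall G S t T, typing (BSub S :: G) t T -> typing G (ttabs S t) (TAllK S T)
| T_TApp : forall G t S T S', typing G t (TAllT S T) -> sub G S' S ->
    typing G (ttapp t S') (topen T S').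

(* Theta^*(T): promotion of a type variable to its (iterated) upper bound. *)
Fixpoint expose (G : ctx) (T : typ) : typ :=
  match T with
  | TVar n =>
      match G with
      | [] => T
      | b :: G' =>
          match n with
          | 0 => match b with
                 | BSub U => tshift 1 0 (expose G' U)
                 | BTyp _ => T
                 end
          | S m => tshift 1 0 (expose G' (TVar m))
          end
      end
  | _ => T
  end.

Inductive mtyping : ctx -> term -> typ -> Prop :=
| M_Var : forall G n U, nth_error G n = Some (BTyp U) -> mtyping G (tvar n) (tshift (S n) 0 U)
| M_Top : forall G, mtyping G ttop TTop
| M_Abs : forall G S t T, mtyping (BTyp S :: G) t (tshift 1 0 T) -> mtyping G (tabs S t) (TArr S T)
| M_App : forall G r s R S S' T, mtyping G r R -> mtyping G s S -> sub G S S' ->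
    expose G R = TArr S' T -> mtyping G (tapp r s) T
| M_TAbs : forall G S t T, mtyping (BSub S :: G) t T -> mtyping G (ttabs S t) (TAllK S T)
| M_TApp : forall G r R S S' T, mtyping G r R -> sub G S S' ->
    (expose G R = TAllK S' T \/ expose G R = TAllT S' T) ->
    mtyping G (ttapp r S) (topen T S).

(* Main.v *)
Require Import Defs.
From Stdlib Require Import Arith List.
From Stdlib Require Import Lia.
Import ListNotations.

Definition upr (xi : nat -> nat) (n : nat) : nat :=
  match n with 0 => 0 | S m => S (xi m) end.

Fixpoint ren (xi : nat -> nat) (T : typ) : typ :=
  match T with
  | TTop => TTop
  | TVar n => TVar (xi n)
  | TArr A B => TArr (ren xi A) (ren xi B)
  | TAllK A B => TAllK (ren xi A) (ren (upr xi) B)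
  | TAllT A B => TAllT (ren xi A) (ren (upr xi) B)
  end.

Definition up (s : nat -> typ) (n : nat) : typ :=
  match n with 0 => TVar 0 | S m => ren S (s m) end.

Fixpoint inst (s : nat -> typ) (T : typ) : typ :=
  match T with
  | TTop => TTop
  | TVar n => s n
  | TArr A B => TArr (inst s A) (inst s B)
  | TAllK A B => TAllK (inst s A) (inst (up s) B)
  | TAllT A B => TAllT (inst s A) (inst (up s) B)
  end.

Lemma ren_ext : forall T xi zeta, (forall n, xi n = zeta n) -> ren xi T = ren zeta T.
Proof.
  induction T; intros xi zeta H; simpl; f_equal; auto;
  apply IHT2; intros [|n]; simpl; auto.
Qed.

Lemma inst_ext : forall T s t, (forall n, s n = t n) -> inst s T = inst t T.
Proof.
  induction T; intros s t H; simpl; f_equal; auto;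
  apply IHT2; intros [|n]; simpl; auto; rewrite H; auto.
Qed.

Lemma ren_ren : forall T xi zeta, ren xi (ren zeta T) = ren (fun n => xi (zeta n)) T.
Proof.
  induction T; intros xi zeta; simpl; f_equal; auto;
  rewrite IHT2; apply ren_ext; intros [|n]; reflexivity.
Qed.

Lemma inst_ren : forall T s xi, inst s (ren xi T) = inst (fun n => s (xi n)) T.
Proof.
  induction T; intros s xi; simpl; f_equal; auto;
  rewrite IHT2; apply inst_ext; intros [|n]; reflexivity.
Qed.

Lemma ren_inst : forall T s xi, ren xi (inst s T) = inst (fun n => ren xi (s n)) T.
Proof.
  induction T; intros s xi; simpl; f_equal; auto;
  rewrite IHT2; apply inst_ext; intros [|n]; simpl; auto;
  rewrite !ren_ren; apply ren_ext; reflexivity.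
Qed.

Lemma inst_id : forall T s, (forall n, s n = TVar n) -> inst s T = T.
Proof.
  induction T; intros s H; simpl; [reflexivity|apply H|f_equal; auto..];
  apply IHT2; intros [|n]; simpl; auto; rewrite H; reflexivity.
Qed.

Lemma tshift_ren : forall T d c,
  tshift d c T = ren (fun n => if c <=? n then n + d else n) T.
Proof.
  induction T; intros d c; simpl; [reflexivity|destruct (c <=? n); reflexivity|f_equal; auto..];
  rewrite IHT2; apply ren_ext; intros [|n]; simpl; auto;
  destruct (c <=? n); reflexivity.
Qed.

Lemma tshift1 : forall T, tshift 1 0 T = ren S T.
Proof.
  intros T; rewrite tshift_ren; apply ren_ext; intros n; simpl; f_equal; lia.
Qed.

Lemma tshiftSS : forall U n, tshift (S (S n)) 0 U = ren S (tshift (S n) 0 U).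
Proof.
  intros U n; rewrite !tshift_ren, ren_ren; apply ren_ext; intros k; simpl; lia.
Qed.

Lemma tshift_comp1 : forall U n, tshift 1 0 (tshift (S n) 0 U) = tshift (S (S n)) 0 U.
Proof. intros; rewrite tshift1, tshiftSS; reflexivity. Qed.

Lemma expose_nonvar : forall G T, (forall n, T <> TVar n) -> expose G T = T.
Proof.
  intros G T H; destruct G; destruct T; auto; exfalso; eapply H; eauto.
Qed.

Lemma E2 : forall b G T, expose (b :: G) (tshift 1 0 T) = tshift 1 0 (expose G T).
Proof.
  intros b G T; destruct T; simpl;
  try (rewrite (expose_nonvar G); [reflexivity | intros; discriminate]).
  rewrite Nat.add_1_r; reflexivity.
Qed.

Lemma E1 : forall G n U, nth_error G n = Some (BSub U) ->
  expose G (TVar n) = expose G (tshift (S n) 0 U).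
Proof.
  induction G as [|b G IH]; intros [|n] U H; simpl in H; try discriminate.
  - inversion H; subst. rewrite E2. reflexivity.
  - change (expose (b :: G) (TVar (S n))) with (tshift 1 0 (expose G (TVar n))).
    rewrite (IH n U H). rewrite <- (E2 b). rewrite tshift_comp1. reflexivity.
Qed.

Lemma wf_ren : forall G T, wf_typ G T -> forall G' xi,
  (forall n U, nth_error G n = Some (BSub U) -> exists U', nth_error G' (xi n) = Some (BSub U')) ->
  wf_typ G' (ren xi T).
Proof.
  induction 1; intros G' xi Hx; simpl.
  - constructor.
  - destruct (Hx _ _ H) as [U' HU']. econstructor; eauto.
  - constructor; auto.
  - constructor; auto. apply IHwf_typ2. intros [|n] U HU; simpl in *.
    + eexists; eauto.
    + apply (Hx _ _ HU).
  - constructor; auto. apply IHwf_typ2. intros [|n] U HU; simpl in *.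
    + eexists; eauto.
    + apply (Hx _ _ HU).
Qed.

Lemma wf_weaken : forall G T b, wf_typ G T -> wf_typ (b :: G) (ren S T).
Proof.
  intros G T b H; apply wf_ren with G; auto.
  intros n U HU; simpl; eauto.
Qed.

Lemma wf_inst : forall G T, wf_typ G T -> forall G' s,
  (forall n U, nth_error G n = Some (BSub U) -> wf_typ G' (s n)) ->
  wf_typ G' (inst s T).
Proof.
  induction 1; intros G' s Hs; simpl.
  - constructor.
  - eauto.
  - constructor; auto.
  - constructor; auto. apply IHwf_typ2. intros [|n] U HU; simpl in *.
    + econstructor; reflexivity.
    + apply wf_weaken. eauto.
  - constructor; auto. apply IHwf_typ2. intros [|n] U HU; simpl in *.
    + econstructor; reflexivity.
    + apply wf_weaken. eauto.
Qed.

Lemma wf_inst_agree : forall G T, wf_typ G T -> forall s t,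
  (forall n U, nth_error G n = Some (BSub U) -> s n = t n) -> inst s T = inst t T.
Proof.
  induction 1; intros s t Hs; simpl; f_equal; eauto;
  apply IHwf_typ2; intros [|n] U HU; simpl in *; auto; erewrite Hs; eauto.
Qed.

Definition sig0 (n : nat) : typ := match n with 0 => TTop | S m => TVar m end.

Lemma wf_strengthen : forall G b T, wf_typ (b :: G) (ren S T) -> wf_typ G T.
Proof.
  intros G b T H.
  assert (E : inst sig0 (ren S T) = T).
  { rewrite inst_ren. apply inst_id. intros; reflexivity. }
  rewrite <- E. apply wf_inst with (b :: G); auto.
  intros [|n] U HU; simpl in *.
  - constructor.
  - econstructor; eauto.
Qed.

Lemma wf_ctx_lookup : forall G, wf_ctx G -> forall n U,
  (nth_error G n = Some (BSub U) \/ nth_error G n = Some (BTyp U)) ->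
  wf_typ G (tshift (S n) 0 U).
Proof.
  induction 1; intros [|n] U Hn; simpl in Hn;
    try (destruct Hn as [Hn|Hn]; discriminate).
  - destruct Hn as [Hn|Hn]; inversion Hn; subst. rewrite tshift1; apply wf_weaken; auto.
  - rewrite tshiftSS; apply wf_weaken; auto.
  - destruct Hn as [Hn|Hn]; inversion Hn; subst. rewrite tshift1; apply wf_weaken; auto.
  - rewrite tshiftSS; apply wf_weaken; auto.
Qed.

Lemma wf_expose : forall G, wf_ctx G -> forall T, wf_typ G T -> wf_typ G (expose G T).
Proof.
  induction G as [|b G IH]; intros HG T HT.
  - destruct T; simpl; exact HT.
  - assert (HG' : wf_ctx G) by (inversion HG; auto).
    destruct T; try (simpl; exact HT).
    destruct n as [|m].
    + destruct b as [U|U]; simpl.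
      * inversion HG; subst. rewrite tshift1; apply wf_weaken; auto.
      * exact HT.
    + simpl. rewrite tshift1; apply wf_weaken. apply IH; auto.
      inversion HT; subst. simpl in H1. econstructor; eauto.
Qed.

Lemma ren_upr_S : forall xi X, ren (upr xi) (ren S X) = ren S (ren xi X).
Proof. intros; rewrite !ren_ren; apply ren_ext; reflexivity. Qed.

Lemma sub_ren : forall G A B, sub G A B -> forall G' xi,
  (forall n U, nth_error G n = Some (BSub U) ->
     exists U', nth_error G' (xi n) = Some (BSub U') /\
                ren xi (tshift (S n) 0 U) = tshift (S (xi n)) 0 U') ->
  sub G' (ren xi A) (ren xi B).
Proof.
  assert (Lift : forall G G' xi S0,
    (forall n U, nth_error G n = Some (BSub U) ->
     exists U', nth_error G' (xi n) = Some (BSub U') /\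
                ren xi (tshift (S n) 0 U) = tshift (S (xi n)) 0 U') ->
    (forall n U, nth_error (BSub S0 :: G) n = Some (BSub U) ->
     exists U', nth_error (BSub (ren xi S0) :: G') (upr xi n) = Some (BSub U') /\
                ren (upr xi) (tshift (S n) 0 U) = tshift (S (upr xi n)) 0 U')).
  { intros G G' xi S0 Hx [|n] U HU; simpl in HU.
    - inversion HU; subst. exists (ren xi U). split; [reflexivity|].
      simpl. rewrite !tshift1. apply ren_upr_S.
    - destruct (Hx _ _ HU) as [U' [H1 H2]]. exists U'. split; [exact H1|].
      simpl. rewrite tshiftSS, ren_upr_S, H2, <- tshiftSS. reflexivity. }
  induction 1; intros G' xi Hx; simpl.
  - destruct (Hx _ _ H) as [U' [H1 H2]]. rewrite H2. apply S_Var; auto.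
  - apply S_Top.
  - apply S_Refl.
  - eapply S_Trans; eauto.
  - apply S_Arr; auto.
  - apply S_AllFun. apply IHsub. apply Lift; auto.
  - apply S_AllLoc; auto. apply IHsub2. apply Lift; auto.
  - apply S_AllTop; auto. apply (IHsub2 (BSub TTop :: G') (upr xi)).
    apply (Lift G G' xi TTop); auto.
Qed.

Lemma sub_weaken : forall G A B b, sub G A B -> sub (b :: G) (ren S A) (ren S B).
Proof.
  intros G A B b H. apply sub_ren with G; auto.
  intros n U HU. exists U. split; [simpl; exact HU|].
  rewrite tshiftSS; reflexivity.
Qed.

Lemma sub_inst : forall G A B, sub G A B -> forall G' s,
  (forall n U, nth_error G n = Some (BSub U) -> sub G' (s n) (inst s (tshift (S n) 0 U))) ->
  sub G' (inst s A) (inst s B).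
Proof.
  assert (Lift : forall G G' s S0,
    (forall n U, nth_error G n = Some (BSub U) -> sub G' (s n) (inst s (tshift (S n) 0 U))) ->
    (forall n U, nth_error (BSub S0 :: G) n = Some (BSub U) ->
       sub (BSub (inst s S0) :: G') (up s n) (inst (up s) (tshift (S n) 0 U)))).
  { intros G G' s S0 Hs [|n] U HU; simpl in HU.
    - inversion HU; subst. simpl.
      replace (inst (up s) (tshift 1 0 U)) with (tshift 1 0 (inst s U)).
      + apply S_Var. reflexivity.
      + rewrite !tshift1, inst_ren, ren_inst. reflexivity.
    - simpl. rewrite tshiftSS, inst_ren.
      replace (inst (fun n0 => up s (S n0)) (tshift (S n) 0 U))
        with (ren S (inst s (tshift (S n) 0 U))).
      + apply sub_weaken. auto.
      + rewrite ren_inst. reflexivity. }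
  induction 1; intros G' s Hs; simpl.
  - apply Hs; auto.
  - apply S_Top.
  - apply S_Refl.
  - eapply S_Trans; eauto.
  - apply S_Arr; auto.
  - apply S_AllFun. apply IHsub. apply Lift; auto.
  - apply S_AllLoc; auto. apply IHsub2. apply Lift; auto.
  - apply S_AllTop; auto. apply (IHsub2 (BSub TTop :: G') (up s)).
    apply (Lift G G' s TTop); auto.
Qed.

Ltac cmp := repeat match goal with
  | |- context [Nat.leb ?a ?b] => destruct (Nat.leb_spec a b)
  | |- context [Nat.ltb ?a ?b] => destruct (Nat.ltb_spec a b)
  | |- context [Nat.eqb ?a ?b] => destruct (Nat.eqb_spec a b)
  end.

Lemma us_sh : forall s c, tunshift c (tshift 1 c s) = s.
Proof.
  induction s; intros c; simpl; f_equal; auto.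
  destruct (Nat.leb_spec c n); simpl; cmp; f_equal; lia.
Qed.

Lemma us_sh2 : forall s c k, k <= c -> tunshift (S c) (tshift 1 k s) = tshift 1 k (tunshift c s).
Proof.
  induction s; intros c k Hk; simpl; try (f_equal; auto; apply IHs2; lia).
  destruct (Nat.leb_spec k n); simpl; cmp; simpl; cmp; f_equal; lia.
Qed.

Lemma tsubst_inst : forall T c s, tunshift c (tsubst c s T) =
  inst (fun n => if n <? c then TVar n else if n =? c then tunshift c s else TVar (n - 1)) T.
Proof.
  induction T; intros c s; simpl; f_equal; auto.
  - cmp; simpl; cmp; try reflexivity; try lia; f_equal; lia.
  - rewrite IHT2. apply inst_ext. intros [|m]; simpl; [reflexivity|].
    cmp; simpl; try lia; try reflexivity.
    + subst. rewrite us_sh2 by lia. apply tshift1.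
    + f_equal; lia.
  - rewrite IHT2. apply inst_ext. intros [|m]; simpl; [reflexivity|].
    cmp; simpl; try lia; try reflexivity.
    + subst. rewrite us_sh2 by lia. apply tshift1.
    + f_equal; lia.
Qed.

Definition sigS (S0 : typ) (n : nat) : typ := match n with 0 => S0 | S m => TVar m end.

Lemma topen_inst : forall T S0, topen T S0 = inst (sigS S0) T.
Proof.
  intros T S0. unfold topen. rewrite tsubst_inst. apply inst_ext.
  intros [|m]; simpl.
  - apply us_sh.
  - f_equal; lia.
Qed.

Lemma topen_sub : forall G U A B S', sub (BSub U :: G) A B -> sub G S' U ->
  sub G (topen A S') (topen B S').
Proof.
  intros G U A B S' H HS. rewrite !topen_inst.
  apply sub_inst with (BSub U :: G); auto.
  intros [|n] U0 HU; simpl in HU.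
  - inversion HU; subst. simpl. rewrite tshift1, inst_ren, inst_id; auto.
  - simpl. rewrite tshiftSS, inst_ren, inst_id; [apply S_Var; auto | intros; reflexivity].
Qed.

Lemma sub_expose : forall G T, sub G T (expose G T).
Proof.
  induction G as [|b G IH]; intros T.
  - destruct T; simpl; apply S_Refl.
  - destruct T; try (simpl; apply S_Refl).
    destruct n as [|m].
    + destruct b as [U|U]; simpl.
      * eapply S_Trans. apply S_Var with (n := 0); reflexivity.
        rewrite !tshift1. apply sub_weaken. apply IH.
      * apply S_Refl.
    + simpl. rewrite tshift1. change (TVar (S m)) with (ren S (TVar m)).
      apply sub_weaken. apply IH.
Qed.

Lemma inv_arr : forall G A B, sub G A B -> forall S0 T0, expose G B = TArr S0 T0 ->
  exists S1 T1, expose G A = TArr S1 T1 /\ sub G S0 S1 /\ sub G T1 T0.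
Proof.
  induction 1; intros Sx Tx HE.
  - rewrite (E1 _ _ _ H). exists Sx, Tx. repeat split; auto; apply S_Refl.
  - rewrite expose_nonvar in HE; [discriminate | intros; discriminate].
  - exists Sx, Tx. repeat split; auto; apply S_Refl.
  - destruct (IHsub2 _ _ HE) as [S1 [T1 [H1 [H2 H3]]]].
    destruct (IHsub1 _ _ H1) as [S2 [T2 [H4 [H5 H6]]]].
    exists S2, T2. repeat split; auto; eapply S_Trans; eauto.
  - rewrite expose_nonvar in HE by (intros; discriminate). inversion HE; subst.
    exists S, T. rewrite expose_nonvar by (intros; discriminate). auto.
  - rewrite expose_nonvar in HE; [discriminate | intros; discriminate].
  - rewrite expose_nonvar in HE; [discriminate | intros; discriminate].
  - rewrite expose_nonvar in HE; [discriminate | intros; discriminate].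
Qed.

Lemma inv_all : forall G A B, sub G A B -> forall S0 T0,
  (expose G B = TAllK S0 T0 \/ expose G B = TAllT S0 T0) ->
  exists S1 T1, (expose G A = TAllK S1 T1 \/ expose G A = TAllT S1 T1) /\
    sub G S0 S1 /\ (forall S', sub G S' S0 -> sub G (topen T1 S') (topen T0 S')).
Proof.
  induction 1; intros Sx Tx HE.
  - rewrite (E1 _ _ _ H). exists Sx, Tx. repeat split; auto; intros; apply S_Refl.
  - rewrite expose_nonvar in HE by (intros; discriminate). destruct HE; discriminate.
  - exists Sx, Tx. repeat split; auto; intros; apply S_Refl.
  - destruct (IHsub2 _ _ HE) as [S1 [T1 [H1 [H2 H3]]]].
    destruct (IHsub1 _ _ H1) as [S2 [T2 [H4 [H5 H6]]]].
    exists S2, T2. repeat split; auto.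
    + eapply S_Trans; eauto.
    + intros S' HS'. eapply S_Trans; [apply H6; eapply S_Trans; eauto | apply H3; auto].
  - rewrite expose_nonvar in HE by (intros; discriminate). destruct HE; discriminate.
  - rewrite expose_nonvar in HE by (intros; discriminate).
    destruct HE as [HE|HE]; inversion HE; subst.
    exists Sx, T. rewrite expose_nonvar by (intros; discriminate). repeat split; auto.
    + apply S_Refl.
    + intros; eapply topen_sub; eauto.
  - rewrite expose_nonvar in HE by (intros; discriminate).
    destruct HE as [HE|HE]; inversion HE; subst.
    exists S0, S1. rewrite expose_nonvar by (intros; discriminate). repeat split; auto.
    intros; eapply topen_sub; eauto. eapply S_Trans; eauto.
  - rewrite expose_nonvar in HE by (intros; discriminate).
    destruct HE as [HE|HE]; inversion HE; subst.
    exists S0, S1. rewrite expose_nonvar by (intros; discriminate). repeat split; auto.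
    intros; eapply topen_sub; eauto. apply S_Top.
Qed.

Lemma mtyping_wf : forall G t S0, mtyping G t S0 -> wf_ctx G -> wf_term G t -> wf_typ G S0.
Proof.
  induction 1; intros HG Ht; inversion Ht; subst.
  - apply wf_ctx_lookup; auto.
  - constructor.
  - constructor; auto. apply wf_strengthen with (BTyp S).
    rewrite <- tshift1. apply IHmtyping; auto. constructor; auto.
  - assert (W : wf_typ G (expose G R)) by (apply wf_expose; auto).
    rewrite H2 in W. inversion W; auto.
  - constructor; auto. apply IHmtyping; auto. constructor; auto.
  - assert (W : wf_typ G (expose G R)) by (apply wf_expose; auto).
    rewrite topen_inst.
    assert (W2 : wf_typ (BSub S' :: G) T)
      by (destruct H1 as [E|E]; rewrite E in W; inversion W; auto).
    apply wf_inst with (BSub S' :: G); auto.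
    intros [|n] U HU; simpl in *; auto. econstructor; eauto.
Qed.

Lemma soundness : forall G t S0, mtyping G t S0 -> typing G t S0.
Proof.
  induction 1.
  - apply T_Var; auto.
  - apply T_Top.
  - apply T_Abs; auto.
  - apply T_App with S'.
    + eapply T_Sub; [exact IHmtyping1|]. rewrite <- H2. apply sub_expose.
    + eapply T_Sub; eauto.
  - apply T_TAbs; auto.
  - eapply T_TApp; [|exact H0].
    eapply T_Sub; [exact IHmtyping|]. eapply S_Trans; [apply sub_expose|].
    destruct H1 as [E|E]; rewrite E.
    + apply S_AllLoc; apply S_Refl.
    + apply S_Refl.
Qed.

Lemma completeness : forall G t T, typing G t T -> wf_ctx G -> wf_term G t ->
  exists S0, mtyping G t S0 /\ sub G S0 T.
Proof.
  induction 1; intros HG Ht.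
  - exists TTop; split; [constructor | apply S_Refl].
  - exists (tshift (S n) 0 U); split; [constructor; auto | apply S_Refl].
  - destruct (IHtyping HG Ht) as [S0 [H1 H2]]. exists S0; split; auto.
    eapply S_Trans; eauto.
  - inversion Ht; subst.
    assert (HG' : wf_ctx (BTyp S :: G)) by (constructor; auto).
    destruct (IHtyping HG' ltac:(assumption)) as [S0 [H1 H2]].
    assert (W : wf_typ (BTyp S :: G) S0) by (eapply mtyping_wf; eauto).
    assert (E : S0 = tshift 1 0 (inst sig0 S0)).
    { rewrite tshift1, ren_inst. symmetry.
      rewrite (wf_inst_agree _ _ W _ TVar).
      - apply inst_id; auto.
      - intros [|n] U HU; simpl in HU; [discriminate | reflexivity]. }
    exists (TArr S (inst sig0 S0)). split.
    + apply M_Abs. rewrite <- E. auto.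
    + apply S_Arr; [apply S_Refl|].
      replace T with (inst sig0 (tshift 1 0 T)).
      * apply sub_inst with (BTyp S :: G); auto.
        intros [|n] U HU; simpl in HU; [discriminate|].
        simpl. rewrite tshiftSS, inst_ren, inst_id; [apply S_Var; auto | intros; reflexivity].
      * rewrite tshift1, inst_ren, inst_id; auto.
  - inversion Ht; subst.
    destruct (IHtyping1 HG ltac:(assumption)) as [R [H1 H2]].
    destruct (IHtyping2 HG ltac:(assumption)) as [S2 [H3 H6]].
    assert (HR : expose G (TArr S T) = TArr S T) by (apply expose_nonvar; intros; discriminate).
    destruct (inv_arr _ _ _ H2 _ _ HR) as [S1 [T1 [E [Hs Ht1]]]].
    exists T1. split; auto.
    apply M_App with R S2 S1; auto. eapply S_Trans; eauto.
  - inversion Ht; subst.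
    assert (HG' : wf_ctx (BSub S :: G)) by (constructor; auto).
    destruct (IHtyping HG' ltac:(assumption)) as [S0 [H1 H2]].
    exists (TAllK S S0). split; [constructor; auto | apply S_AllFun; auto].
  - inversion Ht; subst.
    destruct (IHtyping HG ltac:(assumption)) as [R [H1 H2]].
    assert (HR : expose G (TAllT S T) = TAllK S T \/ expose G (TAllT S T) = TAllT S T)
      by (right; apply expose_nonvar; intros; discriminate).
    destruct (inv_all _ _ _ H2 _ _ HR) as [S1 [T1 [E [Hs Ht1]]]].
    exists (topen T1 S'). split; auto.
    apply M_TApp with R S1; auto. eapply S_Trans; eauto.
Qed.

Theorem proposition6p4 : forall (G : ctx) (t : term) (T : typ),
  wf_ctx G -> wf_term G t -> wf_typ G T ->
  (typing G t T <-> exists S, mtyping G t S /\ sub G S T).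
Proof.
  intros G t T HG Ht HT. split.
  - intros H. apply completeness; auto.
  - intros [S0 [H1 H2]]. eapply T_Sub; [apply soundness; eauto | exact H2].
Qed.
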